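(* Let $G$ be a graph on $n$ vertices with degrees $d_1,\ldots,d_n$ and signless Laplacian eigenvalues $q_1\ge\cdots\ge q_n$, and let $t\ge 1$ be an integer. Then the signless Laplacian eigenvalues of the blow-up $G^{(t)}$, listed with multiplicity (a total of $tn$ values), are $tq_1,\ldots,tq_n$ together with $td_1,\ldots,td_n$, where each $td_i$ ($i=1,\ldots,n$) is taken with multiplicity $t-1$.
   Context: All graphs are simple and undirected. For a graph $H$, $A(H)$ is its adjacency matrix, $D(H)$ the diagonal matrix of its vertex degrees, and $Q(H)=D(H)+A(H)$ its signless Laplacian matrix; signless Laplacian eigenvalues are the eigenvalues of $Q(H)$. For a graph $G$ and an integer $t\ge 1$, the blow-up $G^{(t)}$ is the graph obtained by replacing each vertex $u$ of $G$ by a set $V_u$ of $t$ pairwise nonadjacent vertices, and each edge $\{u,v\}$ of $G$ by a complete bipartite graph with parts $V_u$ and $V_v$ (so $A(G^{(t)})=A(G)\otimes J_t$, with $J_t$ the $t\times t$ all-ones matrix). *)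

(* Defs.v *)
From HB Require Import structures.
From mathcomp Require Import all_boot all_order all_algebra.
Set Implicit Arguments. Unset Strict Implicit. Unset Printing Implicit Defensive.
Import Order.TTheory GRing.Theory Num.Theory.
Local Open Scope ring_scope.

Definition simple_graph (n : nat) (e : rel 'I_n) : Prop :=
  symmetric e /\ irreflexive e.

Definition deg (n : nat) (e : rel 'I_n) (i : 'I_n) : nat := #|[pred j | e i j]|.

Definition adjmx (R : nzRingType) (n : nat) (e : rel 'I_n) : 'M[R]_n :=
  \matrix_(i, j) (e i j)%:R.
Definition degmx (R : nzRingType) (n : nat) (e : rel 'I_n) : 'M[R]_n :=
  diag_mx (\row_i (deg e i)%:R).
Definition slapmx (R : nzRingType) (n : nat) (e : rel 'I_n) : 'M[R]_n :=
  degmx R e + adjmx R e.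

(* Blow-up G^(t): vertex set 'I_(n*t); vertex k lies in the class V_u with
   u = k %/ t (each class has t pairwise nonadjacent vertices), and
   two vertices are adjacent iff their classes are adjacent in G. *)
Lemma blow_class_proof (n t : nat) (k : 'I_(n * t)) : (k %/ t < n)%N.
Proof.
case: t k => [|t] k; first by case: k => m; rewrite muln0.
by rewrite ltn_divLR // ltn_ord.
Qed.

Definition blow_class (n t : nat) (k : 'I_(n * t)) : 'I_n :=
  Ordinal (blow_class_proof k).

Definition blowup (n : nat) (t : nat) (e : rel 'I_n) : rel 'I_(n * t) :=
  fun x y => e (blow_class x) (blow_class y).
Arguments blowup {n} t e.

(* Main.v *)
Require Import Defs.
From HB Require Import structures.
From mathcomp Require Import all_boot all_order all_algebra.
From mathcomp Require Import zify ring fingroup perm.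
Set Implicit Arguments. Unset Strict Implicit. Unset Printing Implicit Defensive.
Import Order.TTheory GRing.Theory Num.Theory.
Local Open Scope ring_scope.

Lemma pidx_proof n m (u : 'I_n) (a : 'I_m) : (u * m + a < n * m)%N.
Proof. have := ltn_ord u; have := ltn_ord a; nia. Qed.

Definition pidx n m (u : 'I_n) (a : 'I_m) : 'I_(n * m) := Ordinal (pidx_proof u a).

Lemma brem_proof n m (r : 'I_(n * m)) : (r %% m < m)%N.
Proof. apply: ltn_pmod; rewrite lt0n; apply/eqP => m0; move: (ltn_ord r); by rewrite {2}m0 muln0. Qed.

Definition brem n m (r : 'I_(n * m)) : 'I_m := Ordinal (brem_proof r).

Lemma class_pidx n m (u : 'I_n) (a : 'I_m) : blow_class (pidx u a) = u.
Proof.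
apply: val_inj => /=; have am := ltn_ord a.
have m0 : (0 < m)%N := leq_ltn_trans (leq0n _) am.
by rewrite divnMDl // divn_small // addn0.
Qed.

Lemma brem_pidx n m (u : 'I_n) (a : 'I_m) : brem (pidx u a) = a.
Proof. by apply: val_inj => /=; rewrite modnMDl modn_small. Qed.

Lemma pidxK n m (r : 'I_(n * m)) : pidx (blow_class r) (brem r) = r.
Proof. by apply: val_inj => /=; rewrite -divn_eq. Qed.

Lemma pidx_eq n m (u v : 'I_n) (a b : 'I_m) :
  (pidx u a == pidx v b) = (u == v) && (a == b).
Proof.
apply/idP/idP => [/eqP E|/andP[/eqP -> /eqP ->] //].
have := congr1 (@blow_class n m) E; have := congr1 (@brem _ _) E.
by rewrite !class_pidx !brem_pidx => -> ->; rewrite !eqxx.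
Qed.

Lemma big_pidx (T : Type) (idx : T) (op : Monoid.com_law idx) n m
    (F : 'I_(n * m) -> T) :
  \big[op/idx]_(r < n * m) F r =
  \big[op/idx]_(u < n) \big[op/idx]_(a < m) F (pidx u a).
Proof.
rewrite pair_big /=.
rewrite (reindex (fun p : 'I_n * 'I_m => pidx p.1 p.2)) //=.
exists (fun r => (blow_class r, brem r)) => [[u a] _ | r _] /=.
  by rewrite class_pidx brem_pidx.
exact: pidxK.
Qed.

Lemma sum_pidx (V : nmodType) n m (F : 'I_(n * m) -> V) :
  \sum_(r < n * m) F r = \sum_(u < n) \sum_(a < m) F (pidx u a).
Proof. exact: big_pidx. Qed.

Lemma prod_pidx (V : comPzSemiRingType) n m (F : 'I_(n * m) -> V) :
  \prod_(r < n * m) F r = \prod_(u < n) \prod_(a < m) F (pidx u a).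
Proof. exact: big_pidx. Qed.

Lemma sumn_pidx n m (F : 'I_(n * m) -> nat) :
  (\sum_(r < n * m) F r = \sum_(u < n) \sum_(a < m) F (pidx u a))%N.
Proof. exact: big_pidx. Qed.

Lemma det_reindex (R : comNzRingType) m k (E : m = k) (g : 'I_m -> 'I_k)
    (ginj : injective g) (M : 'M[R]_k) :
  \det (\matrix_(i, j) M (g i) (g j)) = \det M.
Proof.
subst k; set s := perm ginj.
have -> : \matrix_(i, j) M (g i) (g j) = row_perm s (col_perm s M).
  by apply/matrixP => i j; rewrite !mxE !permE.
rewrite row_permE col_permE !det_mulmx !det_perm odd_permV.
by rewrite mulrCA -expr2 sqrr_sign mulr1.
Qed.

Lemma sum_dl (R : nzRingType) (I : finType) (u : I) (G : I -> R) :
  \sum_w (w == u)%:R * G w = G u.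
Proof.
rewrite (bigD1 u) //= eqxx mul1r big1 ?addr0 // => w /negbTE ->.
by rewrite mul0r.
Qed.

Lemma sum_dr (R : nzRingType) (I : finType) (u : I) (G : I -> R) :
  \sum_w G w * (u == w)%:R = G u.
Proof.
rewrite (bigD1 u) //= eqxx mulr1 big1 ?addr0 // => w; rewrite eq_sym => /negbTE ->.
by rewrite mulr0.
Qed.

Lemma deg_blowup n t (e : rel 'I_n) (k : 'I_(n * t)) :
  deg (blowup t e) k = (t * deg e (blow_class k))%N.
Proof.
rewrite /deg -!sum1_card big_distrr /= [RHS]big_mkcond [LHS]big_mkcond /= sumn_pidx.
apply: eq_bigr => u _; rewrite inE.
under eq_bigr do rewrite inE /blowup class_pidx.
by rewrite sum_nat_const card_ord; case: (e _ u); rewrite ?muln1 ?muln0 ?mul0n.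
Qed.

Definition hidx n t' (i : 'I_(n + n * t')) : 'I_(n * t'.+1) :=
  match split i with
  | inl u => pidx u ord0
  | inr r => pidx (blow_class r) (lift ord0 (brem r))
  end.

Definition hinv n t' (k : 'I_(n * t'.+1)) : 'I_(n + n * t') :=
  match unlift ord0 (brem k) with
  | None => lshift (n * t') (blow_class k)
  | Some b => rshift n (pidx (blow_class k) b)
  end.

Lemma hidxK n t' : cancel (@hidx n t') (@hinv n t').
Proof.
move=> i; rewrite /hidx -[i in RHS]splitK; case: (split i) => [u|r].
  by rewrite /hinv brem_pidx unlift_none class_pidx.
by rewrite /hinv brem_pidx liftK class_pidx pidxK.
Qed.

Lemma Nent (R : realFieldType) n t (e : rel 'I_n) (k l : 'I_(n * t)) :
  char_poly_mx (slapmx R (blowup t e)) k l =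
  ('X - ((t * deg e (blow_class k))%:R)%:P) *+ (k == l)
     - ((e (blow_class k) (blow_class l))%:R)%:P.
Proof.
rewrite /char_poly_mx /slapmx /degmx /adjmx !mxE deg_blowup /blowup.
case: (k == l); rewrite ?mulr1n ?mulr0n ?add0r ?sub0r //.
by rewrite rmorphD opprD addrA.
Qed.

Lemma sum_class (R : nzRingType) n t' (u : 'I_n) (F : 'I_n -> R) :
  \sum_(r < n * t') (blow_class r == u)%:R * F (blow_class r) = F u *+ t'.
Proof.
rewrite sum_pidx; under eq_bigr do under eq_bigr do rewrite class_pidx.
under eq_bigr do rewrite sumr_const card_ord.
by rewrite sumrMnl sum_dl.
Qed.

Unset Implicit Arguments.
Theorem theorem2 (R : realFieldType) (n t : nat) (e : rel 'I_n)
    (q : 'I_n -> R) :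
  simple_graph e ->
  (1 <= t)%N ->
  (forall i j : 'I_n, (i <= j)%N -> q j <= q i) ->
  char_poly (slapmx R e) = \prod_(i < n) ('X - (q i)%:P) ->
  char_poly (slapmx R (blowup t e)) =
    \prod_(i < n) ('X - (t%:R * q i)%:P) *
    \prod_(i < n) ('X - (t%:R * (deg e i)%:R)%:P) ^+ t.-1.
Proof.
move=> _ t1 _ hQ.
case: t t1 => // t' _ /=.
pose x (u : 'I_n) : {poly R} := 'X - ((t'.+1 * deg e u)%:R)%:P.
pose al (u v : 'I_n) : {poly R} := ((e u v)%:R)%:P.
pose c (r : 'I_(n * t')) := blow_class r.
pose N11 := \matrix_(u, v) (x u *+ (u == v) - al u v).
pose N12 := \matrix_(u, s) (- al u (c s)).
pose N21 := \matrix_(r, v) (- al (c r) v).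
pose N22 := \matrix_(r, s) (x (c r) *+ (r == s) - al (c r) (c s)).
have E : (n + n * t' = n * t'.+1)%N by rewrite mulnS.
rewrite /char_poly -(det_reindex E (can_inj (@hidxK n t'))).
have -> : \matrix_(i, j) char_poly_mx (slapmx R (blowup t'.+1 e)) (hidx i) (hidx j)
    = block_mx N11 N12 N21 N22.
  apply/matrixP => i j; rewrite mxE Nent /hidx.
  rewrite -[i in RHS]splitK -[j in RHS]splitK.
  case: (split i) => [u|r]; case: (split j) => [v|s] /=.
  - by rewrite block_mxEul mxE !class_pidx pidx_eq eqxx andbT.
  - by rewrite block_mxEur mxE !class_pidx pidx_eq (negbTE (neq_lift _ _)) andbF sub0r.
  - by rewrite block_mxEdl mxE !class_pidx pidx_eq (eq_sym (lift _ _)) (negbTE (neq_lift _ _)) andbF sub0r.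
  - rewrite block_mxEdr mxE !class_pidx pidx_eq (inj_eq lift_inj).
    by rewrite -pidx_eq !pidxK.
pose S := \matrix_(u, r) ((c r == u)%:R : {poly R}) : 'M_(n, n * t').
pose L := block_mx 1%:M S 0 1%:M.
pose Rr := block_mx 1%:M (-S) 0 1%:M.
pose C := \matrix_(u, v) (x u *+ (u == v) - al u v *+ t'.+1).
pose D := diag_mx (\row_r x (c r)).
have SN21 : S *m N21 = \matrix_(u, v) (- al u v *+ t').
  apply/matrixP => u v; rewrite !mxE; under eq_bigr do rewrite !mxE.

  rewrite /c; exact: (@sum_class _ n t' u (fun w => - al w v)).
have X11 : N11 + S *m N21 = C.
  by apply/matrixP => u v; rewrite SN21 !mxE mulrS mulNrn opprD addrA.
have N21S : N21 *m S = \matrix_(r, s) (- al (c r) (c s)).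
  apply/matrixP => r s; rewrite !mxE; under eq_bigr do rewrite !mxE.
  exact: (@sum_dr _ _ (c s) (fun w => - al (c r) w)).
have CS : C *m S = \matrix_(u, s) C u (c s).
  apply/matrixP => u s; rewrite [LHS]mxE [RHS]mxE; under eq_bigr do rewrite [S _ _]mxE.
  exact: (@sum_dr _ _ (c s) (fun w => C u w)).
have SN22 : S *m N22 = \matrix_(u, s)
    ((c s == u)%:R * x (c s) - al u (c s) *+ t').
  apply/matrixP => u s; rewrite !mxE; under eq_bigr do rewrite !mxE mulrBr.
  rewrite sumrB /c (@sum_class _ n t' u (fun w => al w (blow_class s))); congr (_ - _).
  rewrite (bigD1 s) //= eqxx mulr1n big1 ?addr0 // => r /negbTE ->.
  by rewrite mulr0n mulr0.
have key : L *m block_mx N11 N12 N21 N22 *m Rr = block_mx C 0 N21 D.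
  rewrite !mulmx_block !mul1mx !mul0mx !mulmx1 !mulmx0 !addr0 !add0r.
  congr block_mx; first exact: X11.
  - rewrite X11 mulmxN CS SN22; apply/matrixP => u s; rewrite !mxE.
    case: (eqVneq (c s) u) => [<-|ne]; rewrite ?eqxx ?(eq_sym u) ?ne ?mulr1n ?mulr0n ?mul1r ?mul0r.
      rewrite mulrS; ring.
    rewrite mulrS; ring.
  - rewrite mulmxN N21S; apply/matrixP => r s; rewrite !mxE.
    by rewrite opprK addrC subrK.
have -> : \det (block_mx N11 N12 N21 N22) = \det (L *m block_mx N11 N12 N21 N22 *m Rr).
  by rewrite !det_mulmx !det_ublock !det1 !mulr1 mul1r.
rewrite key det_lblock.
have dD : \det D = \prod_(i < n) ('X - (t'.+1%:R * (deg e i)%:R)%:P) ^+ t'.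
  rewrite det_diag prod_pidx; apply: eq_bigr => u _.
  under eq_bigr do rewrite mxE /c class_pidx.
  by rewrite prodr_const card_ord /x natrM.
rewrite dD; congr (_ * _).
have k0 : (t'.+1%:R : R) != 0 by rewrite pnatr_eq0.
pose qq : {poly R} := (t'.+1%:R^-1)%:P * 'X.
have -> : C = (t'.+1%:R : {poly R}) *: map_mx (comp_poly qq) (char_poly_mx (slapmx R e)).
  apply/matrixP => u v; rewrite /char_poly_mx /slapmx /degmx /adjmx !mxE.
  rewrite rmorphB rmorphMn /= comp_polyX comp_polyC -(rmorph_nat (@polyC R)).
  rewrite /x /al /qq; case: (u == v); rewrite ?mulr1n ?mulr0n ?add0r ?sub0r.
    rewrite mulrBr mulrA -polyCM mulfV // mul1r -polyCM -polyCMn -addrA -opprD -rmorphD.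
    by rewrite natrM mulrDr !mulr_natl.
  by rewrite mulrN rmorph_nat mulr_natl.
rewrite detZ det_map_mx /= -/(char_poly _) hQ rmorph_prod.
have -> : (t'.+1%:R : {poly R}) ^+ n = \prod_(i < n) t'.+1%:R by rewrite prodr_const card_ord.
rewrite -big_split /=; apply: eq_bigr => i _.
rewrite comp_polyB comp_polyX comp_polyC /qq -(rmorph_nat (@polyC R)).
by rewrite mulrBr mulrA -!polyCM mulfV // mul1r.
Qed.
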